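(* Let $a$ be a positive integer, let $G$ be a finite simple graph of arboricity at most $a$ containing no isolated edges, and let $p_1<p_2<\cdots<p_a$ be the first $a$ prime numbers larger than $3$. Then ${\chi^\Sigma_g}^\star(G)\leq p_1p_2\cdots p_a$.
   Context: The arboricity of $G$ is the least number of forests into which $E(G)$ can be decomposed; an isolated edge is a connected component isomorphic to $K_2$. For an Abelian group $\mathcal{G}$ with identity $0$ and $f\colon E(G)\to\mathcal{G}$, $w_f(v)=\sum_{u\in N(v)}f(uv)$. ${\chi^\Sigma_g}^\star(G)$ is the least positive integer $k$ such that for every Abelian group $\mathcal{G}$ of order $k$ there exists $f\colon E(G)\to\mathcal{G}\setminus\{0\}$ with $w_f(u)\neq w_f(v)$ for every edge $uv$. *)

(* Defs.v *)
From HB Require Import structures.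
From mathcomp Require Import all_boot all_order all_algebra.
Set Implicit Arguments. Unset Strict Implicit. Unset Printing Implicit Defensive.
Import GRing.Theory.
Local Open Scope ring_scope.

Definition simple_graph (T : finType) (e : rel T) : Prop :=
  symmetric e /\ irreflexive e.

(* Edges are identified with 2-element vertex sets [set u; v]. *)

Definition is_forest (T : finType) (r : rel T) : Prop :=
  forall s : seq T, uniq s -> (3 <= size s)%N -> ~~ cycle r s.

Definition arboricity_le (T : finType) (e : rel T) (a : nat) : Prop :=
  exists c : {set T} -> 'I_a,
    forall i : 'I_a, is_forest [rel u v | e u v && (c [set u; v] == i)].

Definition no_isolated_edge (T : finType) (e : rel T) : Prop :=
  forall u v, e u v -> exists w, [/\ w != u, w != v & e u w || e v w].

Definition wsum (T : finType) (e : rel T) (Z : zmodType) (f : {set T} -> Z)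
  (v : T) : Z := \sum_(u | e v u) f [set u; v].

Definition group_sum_good (T : finType) (e : rel T) (k : nat) : Prop :=
  forall Z : finZmodType, #|Z| = k ->
    exists f : {set T} -> Z,
      (forall u v, e u v -> f [set u; v] != 0) /\
      (forall u v, e u v -> wsum e f u != wsum e f v).

Definition first_primes_gt3 (a : nat) (ps : seq nat) : Prop :=
  [/\ size ps = a, sorted ltn ps,
      all (fun p => prime p && (3 < p)%N) ps &
      forall q, prime q -> (3 < q)%N -> (q <= last 0%N ps)%N -> q \in ps].

(* Main.v *)
Require Import Defs.
From HB Require Import structures.
From mathcomp Require Import all_boot all_order all_algebra.
From mathcomp Require fingroup pgroup cyclic.
From Stdlib Require Import Classical.
From mathcomp Require Import zify.

Section Sec_t1.
Import mathcomp.fingroup.fingroup mathcomp.solvable.pgroup mathcomp.solvable.cyclic.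
Import GRing.Theory FinRing.Theory.
Local Open Scope ring_scope.
Lemma elem_order (Z : finZmodType) p : prime p -> (p %| #|Z|)%N ->
  exists x : Z, forall n, (x *+ n == 0) = (p %| n)%N.
Proof.
move=> pp pd.
have pd' : (p %| #|[set: Z]|)%N by rewrite cardsT.
have [x _ ox] := Cauchy pp pd'.
exists x => n.
rewrite -ox -order_dvdn. by [].
Qed.

End Sec_t1.

Section Sec_t2.
Import GRing.Theory FinRing.Theory.
Local Open Scope ring_scope.

Lemma mulrn_modE (Z : zmodType) (x : Z) p m n :
  (forall k, (x *+ k == 0) = (p %| k)%N) ->
  (x *+ m == x *+ n) = (m == n %[mod p])%N.
Proof.
move=> hx.
wlog le_mn : m n / (m <= n)%N.
  move=> W; case: (leqP m n) => h; first exact: W.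
  by rewrite eq_sym W ?(ltnW h) // eq_sym.
by rewrite [in RHS]eq_sym eqn_mod_dvd // -hx mulrnBr // subr_eq0 eq_sym.
Qed.

Lemma modMcancel d K m n : coprime d K ->
  (m * K == n * K %[mod d])%N = (m == n %[mod d])%N.
Proof.
move=> cK.
wlog le_mn : m n / (m <= n)%N.
  move=> W; case: (leqP m n) => h; first exact: W.
  by rewrite eq_sym W ?(ltnW h) // eq_sym.
rewrite eq_sym [in RHS]eq_sym !eqn_mod_dvd ?leq_mul2r ?le_mn ?orbT //.
by rewrite -mulnBl Gauss_dvdl.
Qed.

Lemma indep (Z : zmodType) a (P : 'I_a -> nat) (x : 'I_a -> Z) (m n : 'I_a -> nat) :
  (forall i k, (x i *+ k == 0) = (P i %| k)%N) ->
  (forall i j, i != j -> coprime (P i) (P j)) ->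
  \sum_i x i *+ m i = \sum_i x i *+ n i -> forall j, (m j = n j %[mod P j])%N.
Proof.
move=> hx hc E j.
set K := (\prod_(i < a | i != j) P i)%N.
have E2 : forall q : 'I_a -> nat, (\sum_i x i *+ q i) *+ K = x j *+ (q j * K).
  move=> q; rewrite -sumrMnl (bigD1 j) //= big1 ?addr0 ?mulrnA // => i hij.
  rewrite -mulrnA; apply/eqP; rewrite hx dvdn_mull //.
  by rewrite /K (bigD1 i) //= dvdn_mulr.
have cK : coprime (P j) K.
  rewrite /K; elim/big_ind: _ => //; first by rewrite coprimen1.
    by move=> u v hu hv; rewrite coprimeMr hu hv.
  by move=> i hij; apply: hc; rewrite eq_sym.
have := congr1 (fun z => z *+ K) E; rewrite /= !E2 => /eqP.
by rewrite (@mulrn_modE _ _ _ _ _ (hx j)) modMcancel // => /eqP.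
Qed.

End Sec_t2.

Section Sec_t3.
Set Implicit Arguments. Unset Strict Implicit. Unset Printing Implicit Defensive.

Section Graph.
Variable T : finType.

Lemma set2_inj (a b c d : T) : [set a; b] = [set c; d] ->
  (a = c /\ b = d) \/ (a = d /\ b = c).
Proof.
move=> E.
have ha : a \in [set c; d] by rewrite -E set21.
have hb : b \in [set c; d] by rewrite -E set22.
have hc : c \in [set a; b] by rewrite E set21.
have hd : d \in [set a; b] by rewrite E set22.
move: ha hb hc hd; rewrite !inE => /orP[]/eqP-> /orP[]/eqP-> hc hd.
- by move: hd; rewrite orbb => /eqP->; left.
- by left.
- by right.
- by move: hc; rewrite orbb => /eqP->; right.
Qed.

Variable H : rel T.

Lemma cycle_contra a s0 s' b : is_forest H -> uniq (a :: s0 :: s') ->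
  path H a (s0 :: s') -> b \in s' -> H b a -> False.
Proof.
move=> hf hu hp bin hba.
case/splitPr: bin hu hp => p1 p2 hu hp.
have E : a :: s0 :: p1 ++ b :: p2 = (a :: s0 :: rcons p1 b) ++ p2
  by rewrite /= cat_rcons.
move: hu; rewrite E cat_uniq => /andP[hu _].
have {}hp : path H a (s0 :: rcons p1 b).
  by move: hp; rewrite -cat_rcons -cat_cons cat_path => /andP[].
have hs : (3 <= size (a :: s0 :: rcons p1 b))%N by rewrite /= size_rcons.
have /negP := hf _ hu hs; apply.
have -> : cycle H [:: a, s0 & rcons p1 b] = path H a (rcons (s0 :: rcons p1 b) a) by [].
by rewrite rcons_path hp /= last_rcons hba.
Qed.

Lemma two_nbrs (r : rel T) s x : uniq s -> (3 <= size s)%N -> cycle r s -> x \in s ->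
  exists y z, [/\ y \in s, z \in s, y != z, r x y & r z x].
Proof.
move=> hu hs hc xs.
case/rot_to: xs => i t E.
have hu' : uniq (x :: t) by rewrite -E rot_uniq.
have hc' : cycle r (x :: t) by rewrite -E rot_cycle.
have hs' : (3 <= size (x :: t))%N by rewrite -E size_rot.
have mem : forall z, z \in x :: t -> z \in s by move=> z; rewrite -E mem_rot.
case: t hu' hc' hs' mem E => [|t0 [|t1 t']] //= hu' hc' _ mem _.
exists t0, (last t1 t'); split.
- by apply: mem; rewrite !inE eqxx orbT.
- by apply: mem; rewrite inE; apply/orP; right; rewrite inE; apply/orP; right; exact: mem_last.
- move: hu' => /andP[_ /andP[+ _]]; apply: contra => /eqP ->.
  exact: mem_last.
- by move: hc'; rewrite /= => /andP[].
- have : path r x (rcons [:: t0, t1 & t'] x) := hc'.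
  by rewrite rcons_path => /andP[_].
Qed.

Lemma longest (P : T -> seq T -> Prop) N :
  (forall x s, P x s -> (size s < N)%N) -> (exists x s, P x s) ->
  exists x s, P x s /\ forall y t, P y t -> (size t <= size s)%N.
Proof.
move=> hb [x0 [s0 h0]].
suff : forall k x s, P x s -> (N - size s <= k)%N ->
  exists x s, P x s /\ forall y t, P y t -> (size t <= size s)%N.
  by move/(_ N x0 s0 h0); apply; apply: leq_subr.
elim=> [|k IH] x s hP hk.
  exists x, s; split=> // y t hy.
  have := hb _ _ hy; have := hb _ _ hP.
  by move: hk; rewrite leqn0 subn_eq0 => hk h1 h2; apply: ltnW; apply: leq_trans h2 hk.
case: (classic (forall y t, P y t -> (size t <= size s)%N)) => hm.
  by exists x, s.
have [y hy] := not_all_ex_not _ _ hm.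
have [t ht] := not_all_ex_not _ _ hy.
have [hPt hlt] := imply_to_and _ _ ht.
move/negP: hlt; rewrite -ltnNge => hlt.
apply: (IH y t hPt).
have := hb _ _ hPt.
move: hk hlt; lia.
Qed.

End Graph.

End Sec_t3.

Section Sec_t4.
Set Implicit Arguments. Unset Strict Implicit. Unset Printing Implicit Defensive.

Section KL.
Variable T : finType.
Variable H : rel T.
Hypotheses (hsym : symmetric H) (hirr : irreflexive H) (hf : is_forest H).

Lemma KL u0 v0 : H u0 v0 ->
  exists u v, [/\ H u v, (forall y, H v y -> y = u) &
     (forall z1 z2, H u z1 -> H u z2 -> (exists2 y, H z1 y & y != u) ->
        (exists2 y, H z2 y & y != u) -> z1 = z2)].
Proof.
move=> h0.
pose P x s := [/\ uniq (x :: s), path H x s & s != [::]].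
have hb : forall x s, P x s -> (size s < #|T|)%N.
  move=> x s [hu _ _]; have := max_card (mem (x :: s)).
  by rewrite (card_uniqP hu).
have hex : exists x s, P x s.
  exists u0, [:: v0]; split=> //=; rewrite ?andbT //.
  rewrite inE; apply/eqP=> E; move: h0; by rewrite E hirr.
have [x [s [[hu hp hne] hmax]]] := longest hb hex.
case: s hu hp hne hmax => [|x1 rest] // hu hp _ hmax.
have hxx1 : H x x1 by move: hp => /= /andP[].
have leaf : forall y, H x y -> y = x1.
  move=> y hxy; case: (eqVneq y x1) => // ne; exfalso.
  case: (boolP (y \in x1 :: rest)) => ys.
    move: ys; rewrite inE (negbTE ne) /= => ys.
    by apply: (cycle_contra hf hu hp ys); rewrite hsym.
  have : P y [:: x, x1 & rest].
    split=> //; last by rewrite /= hsym hxy.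
    rewrite cons_uniq hu andbT inE negb_or ys andbT.
    by apply/eqP=> E; move: hxy; rewrite E hirr.
  by move/hmax => /=; rewrite ltnn.
have nonleaf : forall z, H x1 z -> (exists2 y, H z y & y != x1) ->
    exists r', rest = z :: r'.
  move=> z hz [y hzy hy].
  case: (eqVneq z x) => [E|zx].
    by move: hzy; rewrite E => /leaf; move/eqP: hy.
  case: (boolP (z \in rest)) => zr.
    case: rest hu hp hmax zr => [|r0 r'] // hu hp hmax.
    rewrite inE; case: (eqVneq z r0) => [->|ne] /= zr; first by exists r'.
    exfalso; move: hu hp => /= /andP[_ hu] /andP[_ hp].
    by apply: (cycle_contra hf hu hp zr); rewrite hsym.
  exfalso.
  have zx1 : z != x1 by apply/eqP=> E; move: hz; rewrite E hirr.
  have zs : z \notin x1 :: rest by rewrite inE negb_or zx1.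
  have hu1 : uniq (x1 :: rest) by move: hu => /= /andP[].
  have hp1 : path H x1 rest by move: hp => /= /andP[].
  case: (boolP (y \in x :: x1 :: rest)) => ys.
    move: ys; rewrite inE; case: (eqVneq y x) => [E|yx] /=.
      by move: hzy; rewrite E hsym => /leaf; move/eqP: zx1.
    rewrite inE (negbTE hy) /= => yr.
    have hu2 : uniq [:: z, x1 & rest] by rewrite /= zs.
    have hp2 : path H z (x1 :: rest) by rewrite /= hp1 andbT hsym.
    by apply: (cycle_contra hf hu2 hp2 yr); rewrite hsym.
  have : P y [:: z, x1 & rest].
    split=> //; last by rewrite /= hsym hzy hsym hz hp1.
    rewrite cons_uniq (cons_uniq z) hu1 zs andbT.
    move: ys; rewrite !inE !negb_or => /andP[_ ->]; rewrite !andbT.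
    by apply/eqP=> E; move: hzy; rewrite E hirr.
  by move/hmax => /=; rewrite ltnn.
exists x1, x; split=> //; first by rewrite hsym.
move=> z1 z2 h1 h2 e1 e2.
have [r1 E1] := nonleaf _ h1 e1.
have [r2 E2] := nonleaf _ h2 e2.
by move: E1; rewrite E2 => -[].
Qed.

End KL.

End Sec_t4.

Section Sec_t5.
Set Implicit Arguments. Unset Strict Implicit. Unset Printing Implicit Defensive.
Import GRing.Theory.
Local Open Scope ring_scope.

Lemma avoid3 (K : finType) (P1 P2 P3 : pred K) : (3 < #|K|)%N ->
  (forall t1 t2, P1 t1 -> P1 t2 -> t1 = t2) ->
  (forall t1 t2, P2 t1 -> P2 t2 -> t1 = t2) ->
  (forall t1 t2, P3 t1 -> P3 t2 -> t1 = t2) ->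
  exists t, [&& ~~ P1 t, ~~ P2 t & ~~ P3 t].
Proof.
move=> hK h1 h2 h3.
have c1 : (#|[set t | P1 t]| <= 1)%N.
  by apply/card_le1_eqP => x y; rewrite !inE => hx hy; apply: h1.
have c2 : (#|[set t | P2 t]| <= 1)%N.
  by apply/card_le1_eqP => x y; rewrite !inE => hx hy; apply: h2.
have c3 : (#|[set t | P3 t]| <= 1)%N.
  by apply/card_le1_eqP => x y; rewrite !inE => hx hy; apply: h3.
set A := [set t | P1 t] :|: [set t | P2 t] :|: [set t | P3 t].
have cA : (#|A| <= 3)%N.
  have e1 := (leq_card_setU ([set t | P1 t] :|: [set t | P2 t]) [set t | P3 t]).1.
  have e2 := (leq_card_setU [set t | P1 t] [set t | P2 t]).1.
  rewrite /A; lia.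
apply: NNPP => hn.
have hall : forall t, t \in A.
  move=> t; apply/negPn/negP => ht; apply: hn; exists t.
  by move: ht; rewrite !inE !negb_or => /andP[/andP[-> ->] ->].
have : (#|[set: K]| <= #|A|)%N by apply: subset_leq_card; apply/subsetP=> t _; exact: hall.
rewrite cardsT; lia.
Qed.

Lemma atmost1_lin (K : fieldType) (a b : K) : (a = 0 -> b != 0) ->
  forall t1 t2, a * t1 + b == 0 -> a * t2 + b == 0 -> t1 = t2.
Proof.
move=> hab t1 t2 e1 e2.
case: (eqVneq a 0) => [a0|an0].
  by move: e1; rewrite a0 mul0r add0r (negbTE (hab a0)).
apply: (mulfI an0).
by move: e1 e2; rewrite !addr_eq0 => /eqP-> /eqP->.
Qed.

End Sec_t5.

Section Sec_t6.
Set Implicit Arguments. Unset Strict Implicit. Unset Printing Implicit Defensive.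
Import GRing.Theory.
Local Open Scope ring_scope.

Section FL.
Variables (K : finFieldType) (T : finType).

Definition goodlab (H : rel T) (c : {set T} -> K) :=
  (forall x y, H x y -> c [set x; y] != 0) /\
  (forall x y, H x y -> wsum H c x != wsum H c y).

Definition remL (H : rel T) (L : {set T}) : rel T :=
  [rel x y | H x y && (x \notin L) && (y \notin L)].

Lemma assemble (H : rel T) u (L : {set T}) (c' : {set T} -> K) (lab : T -> K) :
  symmetric H -> irreflexive H ->
  (forall z, z \in L -> H u z) -> (forall z y, z \in L -> H z y -> y = u) ->
  goodlab (remL H L) c' ->
  (forall z, z \in L -> lab z != 0) ->
  (forall z, z \in L -> lab z != \sum_(z in L) lab z + wsum (remL H L) c' u) ->
  (forall y, remL H L u y -> \sum_(z in L) lab z + wsum (remL H L) c' u != wsum (remL H L) c' y) ->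
  exists c, goodlab H c.
Proof.
move=> hsym hirr hLu hL [g1 g2] l1 l2 l3.
set H' := remL H L in g1 g2 l2 l3 *.
set su := \sum_(z in L) lab z + wsum H' c' u in l2 l3 *.
have uL : u \notin L by apply/negP => /hLu; rewrite hirr.
pose c S := if [pick z in L | S == [set z; u]] is Some z then lab z else c' S.
have cL : forall z, z \in L -> c [set z; u] = lab z.
  move=> z zL; rewrite /c; case: pickP => [z' /andP[z'L /eqP E]|hn].
    case: (set2_inj E) => [[->] //|[E1 _]]; by move: zL; rewrite E1 (negbTE uL).
  by move: (hn z); rewrite zL eqxx.
have cN : forall x y, x \notin L -> y \notin L -> c [set x; y] = c' [set x; y].
  move=> x y xL yL; rewrite /c; case: pickP => [z /andP[zL /eqP E]|//].
  case: (set2_inj E) => [[E1 _]|[_ E1]]; first by move: xL; rewrite E1 zL.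
  by move: yL; rewrite E1 zL.
have notLn : forall x y, x \notin L -> x != u -> H x y -> y \notin L.
  move=> x y xL xu hxy; apply/negP => yL.
  have E : x = u by apply: (hL _ _ yL); rewrite hsym.
  by move: xu; rewrite E eqxx.
have sN : forall x, x \notin L -> x != u -> wsum H c x = wsum H' c' x.
  move=> x xL xu; rewrite /wsum; apply: eq_big => y.
    rewrite /H' /remL /= xL andbT; case hxy: (H x y) => //=.
    by rewrite (notLn x y).
  by move=> hxy; rewrite cN // (notLn x y).
have sL : forall z, z \in L -> wsum H c z = lab z.
  move=> z zL; rewrite /wsum (eq_bigl (pred1 u)) ?big_pred1_eq.
    by rewrite setUC cL.
  move=> y /=; apply/idP/eqP => [|->]; first exact: hL.
  by rewrite hsym hLu.
have sU : wsum H c u = su.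
  rewrite /wsum (bigID (fun y => y \in L)) /=; congr (_ + _).
    apply: eq_big => y; first by case yL: (y \in L); rewrite ?andbT ?andbF ?hLu.
    by move=> /andP[_ yL]; rewrite cL.
  apply: eq_big => y; first by rewrite /H' /remL /= uL andbT.
  by move=> /andP[_ yL]; rewrite cN.
have hH' : forall x y, H x y -> x \notin L -> y \notin L -> H' x y.
  by move=> x y hxy xL yL; rewrite /H' /remL /= hxy xL yL.
exists c; split.
- move=> x y hxy.
  case: (boolP (x \in L)) => xL.
    by rewrite (hL _ _ xL hxy) cL ?l1.
  case: (boolP (y \in L)) => yL.
    have yu : x = u by apply: (hL _ _ yL); rewrite hsym.
    by rewrite yu setUC cL ?l1.
  by rewrite cN // g1 // hH'.
- move=> x y hxy.
  case: (boolP (x \in L)) => xL.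
    by rewrite (hL _ _ xL hxy) (sL x xL) sU l2.
  case: (boolP (y \in L)) => yL.
    have yu : x = u by apply: (hL _ _ yL); rewrite hsym.
    by rewrite yu (sL y yL) sU eq_sym l2.
  case: (eqVneq x u) => [xu|xu].
    have yu : y != u by apply/eqP=> E; move: hxy; rewrite xu E hirr.
    by rewrite xu sU sN // l3 // -xu hH'.
  case: (eqVneq y u) => [yu|yu].
    by rewrite yu sU sN // eq_sym l3 // -yu hH' // hsym.
  by rewrite !sN // g2 // hH'.
Qed.
End FL.

End Sec_t6.

Section Sec_t7.
Set Implicit Arguments. Unset Strict Implicit. Unset Printing Implicit Defensive.
Import GRing.Theory.
Local Open Scope ring_scope.

Section FL2.
Variables (K : finFieldType) (T : finType).
Hypotheses (hK : (3 < #|K|)%N) (h2 : (2:K) != 0).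

Definition ecount (H : rel T) := #|[set p : T * T | H p.1 p.2]|.

Theorem FL (H : rel T) : symmetric H -> irreflexive H -> is_forest H ->
  no_isolated_edge H -> exists c : {set T} -> K, goodlab H c.
Proof.
move: (ltnSn (ecount H)); move: {2}(ecount H).+1 => n.
elim: n H => [|n IH] H // hn hsym hirr hf hni.
case: (pickP [pred p : T * T | H p.1 p.2]) => [[u0 v0] /= h0|hn0]; last first.
  exists (fun _ => 0); split=> x y hxy; by move: (hn0 (x, y)); rewrite /= hxy.
have [u [v [huv leafv uniqu]]] := KL hsym hirr hf h0.
pose L := [set z | H u z && [forall y, H z y ==> (y == u)]].
have hLu : forall z, z \in L -> H u z by move=> z; rewrite inE => /andP[].
have hL : forall z y, z \in L -> H z y -> y = u.
  by move=> z y; rewrite inE => /andP[_ /forallP /(_ y) /implyP h] /h /eqP.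
have vL : v \in L.
  by rewrite inE huv; apply/forallP => y; apply/implyP => /leafv ->.
have uL : u \notin L by apply/negP => /hLu; rewrite hirr.
have notL : forall z, z \notin L -> H u z -> exists2 y, H z y & y != u.
  move=> z; rewrite inE negb_and => /orP[/negP//|]; rewrite negb_forall.
  move=> /existsP[y]; rewrite negb_imply => /andP[k1 k2] _; by exists y.
set H' := remL H L.
have hH' : forall x y, H' x y = [&& H x y, x \notin L & y \notin L].
  by move=> x y; rewrite /H' /remL /= andbA.
have sym' : symmetric H' by move=> x y; rewrite !hH' hsym; case: (H y x); rewrite //= andbC.
have irr' : irreflexive H' by move=> x; rewrite hH' hirr.
have f' : is_forest H'.
  move=> s hu hs; have := hf s hu hs; apply: contra; apply: sub_cycle.
  by move=> x y; rewrite hH' => /andP[].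
have ni' : no_isolated_edge H'.
  move=> x y; rewrite hH' => /and3P[hxy xL yL].
  have nL : forall a b, H a b -> a \notin L -> a != u -> b \notin L.
    move=> a b hab aL au; apply/negP => bL.
    by move: au; rewrite (hL b a bL) ?eqxx // hsym.
  case: (eqVneq x u) => [xu|xu].
    have [y' hyy' y'u] : exists2 y', H y y' & y' != u by apply: notL yL _; rewrite -xu.
    exists y'; rewrite xu y'u; split=> //.
      by apply/eqP=> E; move: hyy'; rewrite E hirr.
    have yu : y != u by apply/eqP=> E; move: hxy; rewrite xu E hirr.
    by rewrite (hH' y y') hyy' yL (nL y y') // orbT.
  case: (eqVneq y u) => [yu|yu].
    have [x' hxx' x'u] : exists2 x', H x x' & x' != u by apply: notL xL _; rewrite -yu hsym.
    exists x'; rewrite yu x'u; split=> //.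
      by apply/eqP=> E; move: hxx'; rewrite E hirr.
    by rewrite (hH' x x') hxx' xL (nL x x').
  have [w [wx wy hw]] := hni x y hxy.
  exists w; split=> //.
  case/orP: hw => hw; rewrite !hH' hw ?xL ?yL /=.
    by rewrite (nL x w).
  by rewrite (nL y w) // orbT.
have lt : (ecount H' < ecount H)%N.
  rewrite /ecount; apply: proper_card; apply/properP; split.
    by apply/subsetP => -[x y]; rewrite !inE /= hH' => /andP[].
  by exists (u, v); rewrite !inE /= ?huv // hH' vL !andbF.
have [c' gc'] := IH H' (leq_trans lt hn) sym' irr' f' ni'.
have eq_addr_r : forall x y : K, (x == x + y) = (y == 0).
  by move=> x y; rewrite -{1}[x]addr0 (inj_eq (addrI x)) eq_sym.
case: (boolP [forall z, H u z ==> (z \in L)]) => [hall|hnall].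
  have [v2 [v2L v2v]] : exists v2, v2 \in L /\ v2 != v.
    have [w [wu wv hw]] := hni u v huv.
    case/orP: hw => hw; first by exists w; split=> //; exact: (implyP (forallP hall w) hw).
    by move: (leafv _ hw) wu => ->; rewrite eqxx.
  have s0 : wsum H' c' u = 0.
    rewrite /wsum big_pred0 // => y; rewrite hH' uL; case hy: (H u y) => //=.
    by rewrite (implyP (forallP hall y) hy).
  set m := #|L|.
  pose b : K := if m%:R == 1 :> K then 1 else 0.
  pose lab z : K := 1 + (if z \in [set v; v2] then b else 0).
  have sum : \sum_(z in L) lab z = m%:R + b *+ 2.
    rewrite big_split /= sumr_const -big_mkcondr /=.
    rewrite (eq_bigl (mem [set v; v2])) ?sumr_const ?cards2 ?(eq_sym v) ?v2v //.
    move=> z /=; case hz: (z \in [set v; v2]); rewrite ?andbT ?andbF //.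
    by move: hz; rewrite in_set2 => /orP[]/eqP->.
  have h11 : (1 + 1 : K) != 0 by rewrite -mulr2n.
  apply: (@assemble K T H u L c' lab hsym hirr hLu hL gc').
  - move=> z zL; rewrite /lab /b; case: ifP => _; rewrite ?addr0 ?oner_neq0 //.
    by case: ifP => _; rewrite ?addr0 ?oner_neq0.
  - move=> z zL; rewrite sum s0 addr0 /lab /b; case: (eqVneq (m%:R : K) 1) => hm.
      rewrite hm ?eqxx mulr2n; case: ifP => _.
        by rewrite [X in _ != X]addrC eq_addr_r oner_neq0.
      by rewrite addr0 eq_addr_r h11.
    rewrite mul0rn addr0; case: ifP => _; rewrite addr0 eq_sym //.
  - move=> y; rewrite /remL /= uL andbT => /andP[hy].
    by rewrite (implyP (forallP hall y) hy).
move: hnall; rewrite negb_forall => /existsP[w]; rewrite negb_imply => /andP[huw wL].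
have uniqw : forall y, H' u y -> y = w.
  move=> y; rewrite hH' => /and3P[huy _ yL].
  exact: (uniqu y w huy huw (notL y yL huy) (notL w wL huw)).
have H'uw : H' u w by rewrite hH' huw uL wL.
have s1 : wsum H' c' u = c' [set w; u].
  rewrite /wsum (eq_bigl (pred1 w)) ?big_pred1_eq //.
  by move=> y /=; apply/idP/eqP => [/uniqw//|->].
have y0nz : c' [set w; u] != 0 by apply: gc'.1; rewrite sym'.
have y0sw : c' [set w; u] != wsum H' c' w by rewrite -s1; apply: gc'.2.
have y0sw' : c' [set w; u] - wsum H' c' w != 0 by rewrite subr_eq0.
set m := #|L|.
have [t /and3P[t1 t2 t3]] := @avoid3 K (fun t => t == 0)
   (fun t => (m%:R - 1) * t + c' [set w; u] == 0)
   (fun t => m%:R * t + (c' [set w; u] - wsum H' c' w) == 0) hK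
   (fun a b ha hb => etrans (eqP ha) (esym (eqP hb)))
   (atmost1_lin (fun _ => y0nz))
   (atmost1_lin (fun _ => y0sw')).
apply: (@assemble K T H u L c' (fun _ => t) hsym hirr hLu hL gc').
- by [].
- move=> z zL; rewrite sumr_const s1; apply: contra t2 => /eqP E.
  by rewrite mulrBl mul1r mulr_natl addrAC -E subrr.
- move=> y hy; rewrite (uniqw y (hy : H' u y)) sumr_const s1; apply: contra t3 => /eqP E.
  by rewrite mulr_natl addrA E subrr.
Qed.
End FL2.

End Sec_t7.

Section Sec_t8.
Set Implicit Arguments. Unset Strict Implicit. Unset Printing Implicit Defensive.

Section EL.
Variable T : finType.

Lemma EL (e F : rel T) : symmetric e -> irreflexive e -> no_isolated_edge e ->
  symmetric F -> subrel F e -> is_forest F ->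
  exists H, [/\ symmetric H, irreflexive H, is_forest H, no_isolated_edge H
             & subrel F H /\ subrel H e].
Proof.
move=> esym eirr eni Fsym Fe Ff.
suff : forall n (H : rel T), (#|[set p : T * T | e p.1 p.2 && ~~ H p.1 p.2]| < n)%N ->
  symmetric H -> subrel F H -> subrel H e -> is_forest H ->
  exists H, [/\ symmetric H, irreflexive H, is_forest H, no_isolated_edge H
             & subrel F H /\ subrel H e].
  by move=> /(_ _ F (ltnSn _) Fsym (fun _ _ h => h) Fe Ff).
elim=> [|n IH] H // hn hsym hFH hHe hf.
have hirr : irreflexive H by move=> x; apply/negP => /hHe; rewrite eirr.
case: (classic (no_isolated_edge H)) => hni; first by exists H; split.
have [u hu] := not_all_ex_not _ _ hni.
have [v hv] := not_all_ex_not _ _ hu.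
have [huv hnw] := imply_to_and _ _ hv.
have isoU : forall y, H u y -> y = v.
  move=> y hy; case: (eqVneq y v) => // yv; exfalso; apply: hnw; exists y.
  split=> //; last by rewrite hy.
  by apply/eqP=> E; move: hy; rewrite E hirr.
have isoV : forall y, H v y -> y = u.
  move=> y hy; case: (eqVneq y u) => // yu; exfalso; apply: hnw; exists y.
  split=> //; last by rewrite hy orbT.
  by apply/eqP=> E; move: hy; rewrite E hirr.
have [w [wu wv ew]] := eni u v (hHe _ _ huv).
have [a [b [hab isoA isoB [eaw wa wb]]]] : exists a b, [/\ H a b,
    (forall y, H a y -> y = b), (forall y, H b y -> y = a) &
    [/\ e a w, w != a & w != b]].
  case/orP: ew => ew; first by exists u, v.
  by exists v, u; split=> //; rewrite hsym.
have ab : a != b by apply/eqP=> E; move: hab; rewrite E hirr.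
pose H2 := [rel x y | H x y || ((x == a) && (y == w)) || ((x == w) && (y == a))].
have nbB : forall y, H2 b y -> y = a.
  move=> y /= /orP[/orP[/isoB //|/andP[/eqP E _]]|/andP[/eqP E _]].
    by move: ab; rewrite E eqxx.
  by move: wb; rewrite E eqxx.
have nbA : forall y, H2 a y -> y = b \/ y = w.
  move=> y /= /orP[/orP[/isoA ->|/andP[_ /eqP ->]]|/andP[/eqP E _]]; auto.
  by move: wa; rewrite E eqxx.
have sym2 : symmetric H2.
  move=> x y /=; rewrite hsym; case: (H y x) => //=.
  by case: (x == a); case: (y == w); case: (x == w); case: (y == a).
have nbB' : forall y, H2 y b -> y = a.
  move=> y /= /orP[/orP[|/andP[_ /eqP E]]|/andP[_ /eqP E]].
  - by rewrite hsym => /isoB.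
  - by move: wb; rewrite E eqxx.
  - by move: ab; rewrite E eqxx.
have nbA' : forall y, H2 y a -> y = b \/ y = w.
  move=> y /= /orP[/orP[|/andP[_ /eqP E]]|/andP[/eqP -> _]]; auto.
    by rewrite hsym => /isoA ->; auto.
  by move: wa; rewrite E eqxx.
apply: (IH H2) => //.
- rewrite -ltnS; apply: leq_trans hn; rewrite ltnS; apply: proper_card; apply/properP; split.
    apply/subsetP => -[x y]; rewrite !inE /= => /andP[-> /=].
    by rewrite !negb_or => /andP[/andP[]].
  exists (a, w); rewrite !inE /= ?eaw ?eqxx ?orbT ?andbF //.
  by apply/negP => /isoA E; move: wb; rewrite E eqxx.
- by move=> x y hxy; rewrite /= hFH.
- move=> x y /= /orP[/orP[/hHe //|/andP[/eqP-> /eqP->]]|/andP[/eqP-> /eqP->]] //.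
  by rewrite esym.
- move=> s hsu hs; apply/negP => hc.
  have bs : b \notin s.
    apply/negP => bs.
    have [y [z [_ _ yz hy hz]]] := two_nbrs hsu hs hc bs.
    by move: yz; rewrite (nbB _ hy) (nbB' _ hz) eqxx.
  have as_ : a \notin s.
    apply/negP => as_.
    have [y [z [ys zs yz hy hz]]] := two_nbrs hsu hs hc as_.
    case: (nbA _ hy) => Ey; first by move: bs; rewrite -Ey ys.
    case: (nbA' _ hz) => Ez; first by move: bs; rewrite -Ez zs.
    by move: yz; rewrite Ey Ez eqxx.
  have hc' : cycle H s.
    apply: (@sub_in_cycle _ [pred x | x \in s] H2 H _ s _ hc); last by apply/allP.
    move=> x y /= xs ys /orP[/orP[//|/andP[/eqP E _]]|/andP[_ /eqP E]].
      by move: as_; rewrite -E xs.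
    by move: as_; rewrite -E ys.
  by move: (hf s hsu hs); rewrite hc'.
Qed.

End EL.

End Sec_t8.

Section Sec_t9.
Set Implicit Arguments. Unset Strict Implicit. Unset Printing Implicit Defensive.
Import GRing.Theory.
Local Open Scope ring_scope.

Definition Sn (T : finType) (H : rel T) (C : {set T} -> nat) x :=
  (\sum_(y | H x y) C [set y; x])%N.

Lemma FLnat (T : finType) p (H : rel T) : prime p -> (3 < p)%N ->
  symmetric H -> irreflexive H -> is_forest H -> no_isolated_edge H ->
  exists C : {set T} -> nat,
    (forall x y, H x y -> ~~ (C [set x; y] == 0 %[mod p])%N) /\
    (forall x y, H x y -> ~~ (Sn H C x == Sn H C y %[mod p])%N).
Proof.
move=> pp p3 hsym hirr hf hni.
have hK : (3 < #|'F_p|)%N by rewrite card_Fp.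
have h2 : (2 : 'F_p) != 0.
  apply/eqP => E; have := congr1 (fun t : 'F_p => (t : nat)) E.
  rewrite /= Fp_cast // !(modn_small (m := 1)) ?modn_small //; by apply: leq_trans p3.
have [c [g1 g2]] := FL hK h2 hsym hirr hf hni.
have key : forall n m, ((n%:R : 'F_p) == m%:R) = (n == m %[mod p])%N.
  move=> n m; apply/eqP/eqP => E.
    have := congr1 (fun t : 'F_p => (t : nat)) E.
    by rewrite !Zp_nat /= Fp_cast.
  by apply: val_inj; rewrite /= !Zp_nat /= Fp_cast.
exists (fun S => (c S : nat)); split.
  move=> x y hxy; rewrite -key natr_Zp; exact: g1.
move=> x y hxy; rewrite -key /Sn !natr_sum.
rewrite (eq_bigr _ (fun y _ => natr_Zp _)) (eq_bigr _ (fun z _ => natr_Zp _)).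
exact: g2.
Qed.

End Sec_t9.

Import GRing.Theory FinRing.Theory.

Theorem corollary7 (a : nat) (T : finType) (e : rel T) (ps : seq nat) :
  (0 < a)%N -> simple_graph e -> arboricity_le e a -> no_isolated_edge e ->
  first_primes_gt3 a ps ->
  exists k : nat, [/\ (0 < k)%N, (k <= \prod_(p <- ps) p)%N & group_sum_good e k].
Proof.
move=> a0 [esym eirr] [col hcol] eni [hsz hsort hall _].
pose P (i : 'I_a) := nth 0%N ps i.
have ips : forall i : 'I_a, (i < size ps)%N by move=> i; rewrite hsz.
have Pin : forall i, P i \in ps by move=> i; apply: mem_nth.
have pP : forall i, prime (P i) /\ (3 < P i)%N.
  by move=> i; have /andP[] := allP hall _ (Pin i).
have ups : uniq ps by apply: (sorted_uniq ltn_trans ltnn).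
have cop : forall i j, i != j -> coprime (P i) (P j).
  move=> i j ij; rewrite prime_coprime ?(pP i).1 // dvdn_prime2 ?(pP i).1 ?(pP j).1 //.
  by rewrite /P nth_uniq.
exists (\prod_(p <- ps) p)%N; split=> //.
  rewrite big_seq; elim/big_ind: _ => //; first by move=> x y; rewrite muln_gt0 => -> ->.
  by move=> p /(allP hall) /andP[/prime_gt0].
move=> Z hZ.
have hx : forall i : 'I_a, exists x : Z, forall n, (x *+ n == 0)%R = (P i %| n)%N.
  move=> i; apply: elem_order; first exact: (pP i).1.
  by rewrite hZ (big_rem _ (Pin i)) /= dvdn_mulr.
have [X hX] := fin_all_exists hx.
pose F (i : 'I_a) := [rel u v | e u v && (col [set u; v] == i)].
have hHC : forall i : 'I_a, exists HC : rel T * ({set T} -> nat),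
   [/\ subrel (F i) HC.1, subrel HC.1 e, symmetric HC.1,
       (forall x y, HC.1 x y -> ~~ (HC.2 [set x; y] == 0 %[mod P i])%N) &
       (forall x y, HC.1 x y -> ~~ (Sn HC.1 HC.2 x == Sn HC.1 HC.2 y %[mod P i])%N)].
  move=> i.
  have Fsym : symmetric (F i) by move=> x y; rewrite /= esym setUC.
  have Fe : subrel (F i) e by move=> x y /andP[].
  have [H [hs hi hf hni [hFH hHe]]] := EL esym eirr eni Fsym Fe (hcol i).
  have [C [c1 c2]] := FLnat (pP i).1 (pP i).2 hs hi hf hni.
  by exists (H, C); split.
have [HC hHC'] := fin_all_exists hHC.
pose H i := (HC i).1.
pose C i := (HC i).2.
pose g i S := if [exists x, exists y, (S == [set x; y]) && H i x y] then C i S else 0%N.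
have hg : forall i x y, g i [set x; y] = if H i x y then C i [set x; y] else 0%N.
  move=> i x y; have [_ _ hs _ _] := hHC' i; rewrite /g; case hxy: (H i x y).
    case: existsP => // hn; exfalso; apply: hn; exists x; apply/existsP; exists y.
    by rewrite eqxx hxy.
  case: existsP => // -[x' /existsP[y' /andP[/eqP E h]]]; exfalso.
  case: (set2_inj E) => [[E1 E2]|[E1 E2]]; move: hxy; rewrite E1 E2.
    by rewrite h.
  by have hs' : symmetric (H i) := hs; rewrite hs' h.
pose f S := (\sum_i X i *+ g i S)%R.
exists f; split.
- move=> u v huv; set i0 := col [set u; v].
  have hF : F i0 u v by rewrite /= huv eqxx.
  have [h1 h2 h3 h4 h5] := hHC' i0.
  apply/eqP => E.
  have E' : (\sum_i X i *+ g i [set u; v] = \sum_i X i *+ (fun _ : 'I_a => 0%N) i)%R.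
    transitivity (0%R : Z); first exact: E.
    by rewrite big1 // => i _; rewrite mulr0n.
  have := @indep _ _ _ _ _ _ hX cop E' i0; rewrite hg.
  have hH : H i0 u v by apply: h1.
  rewrite hH => /eqP hm; exact: (negP (h4 _ _ hH)) hm.
- move=> u v huv; set i0 := col [set u; v].
  have hF : F i0 u v by rewrite /= huv eqxx.
  have [h1 h2 h3 h4 h5] := hHC' i0.
  have ws : forall x, wsum e f x = (\sum_i X i *+ Sn (H i) (C i) x)%R.
    move=> x; rewrite /wsum /f exchange_big /=; apply: eq_bigr => i _.
    have [_ k2 k3 _ _] := hHC' i.
    rewrite sumrMnr; congr (_ *+ _)%R.
    rewrite (eq_bigr (fun w => if H i x w then C i [set w; x] else 0%N)); last first.
      by move=> w _; rewrite hg /H k3.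
    rewrite -big_mkcondr; apply: eq_bigl => w; case hw: (H i x w); rewrite ?andbT ?andbF //.
    exact: k2.
  apply/eqP => E; rewrite !ws in E.
  have := @indep _ _ _ _ _ _ hX cop E i0.
  have hH : H i0 u v by apply: h1.
  by move=> /eqP hm; exact: (negP (h5 _ _ hH)) hm.
Qed.
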